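(* Let two probabilistically equivalent models (each one of the linear dynamic models described in the context) be written in stacked form as $$T_1x=v,\qquad T_2y=w,$$ where $x,y$ are zero-mean nonsingular Gaussian sequences over $[0,N]$, $T_1,T_2$ are nonsingular matrices determined by the model parameters, and $v,w$ are the zero-mean Gaussian vectors of dynamic noise and boundary values with nonsingular covariances $\mathrm{Cov}(v)=P_1$, $\mathrm{Cov}(w)=P_2$. Then the two models are algebraically equivalent if and only if $$T_2'P_2^{-1}w=T_1'P_1^{-1}v .$$
   Context: Sequences are indexed by $[0,N]=(0,1,\ldots,N)$, $x_k\in\mathbb{R}^d$, $'$ denotes transpose. The models considered are linear dynamic models of the following types: forward/backward Markov, reciprocal, and forward/backward $CM_L$ and $CM_F$ models; each such model with its boundary condition can be written as $Tx=v$ with $T$ nonsingular and $v$ stacking the dynamic noise and boundary values. Two models are probabilistically equivalent (PE) if $x$ and $y$ have the same distribution, and algebraically equivalent (AE) if $x=y$ path-wise. *)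

(* Defs.v *)
From HB Require Import structures.
From mathcomp Require Import all_boot all_order all_algebra.
From mathcomp Require Import all_classical all_reals all_analysis.
Set Implicit Arguments. Unset Strict Implicit. Unset Printing Implicit Defensive.
Import Order.TTheory GRing.Theory Num.Theory.
Local Open Scope classical_set_scope.
Local Open Scope ring_scope.

(* The random vector seen as an n-tuple, i.e. a point of the product
   measurable space n.-tuple R (product of Borel sigma-algebras). *)
Definition rv_tuple {d} {Omega : measurableType d} {R : realType} {n : nat}
  (x : Omega -> 'cV[R]_n) : Omega -> n.-tuple R :=
  fun w => [tuple x w i 0 | i < n].

Definition centered_nonsingular_gaussian {d} {Omega : measurableType d}
  {R : realType} (P : probability Omega R) {n : nat}
  (x : Omega -> 'cV[R]_n) (K : 'M[R]_n) : Prop :=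
  [/\ forall i : 'I_n, measurable_fun setT (fun w => x w i 0),
      K^T = K,
      forall a : 'rV[R]_n, a != 0 -> 0 < (a *m K *m a^T) 0 0 &
      forall a : 'rV[R]_n, a != 0 -> forall A : set R, measurable A ->
        P ((fun w => (a *m x w) 0 0) @^-1` A)
        = normal_prob 0 (Num.sqrt ((a *m K *m a^T) 0 0)) A ].

Definition prob_equiv {d} {Omega : measurableType d} {R : realType}
  (P : probability Omega R) {n : nat} (x y : Omega -> 'cV[R]_n) : Prop :=
  forall A : set (n.-tuple R), measurable A ->
    P (rv_tuple x @^-1` A) = P (rv_tuple y @^-1` A).

Definition alg_equiv {Omega : Type} {R : realType} {n : nat}
  (x y : Omega -> 'cV[R]_n) : Prop :=
  forall w, x w = y w.

(* Main.v *)
Require Import Defs.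
From HB Require Import structures.
From mathcomp Require Import all_boot all_order all_algebra.
From mathcomp Require Import all_classical all_reals all_analysis.
Import Order.TTheory GRing.Theory Num.Theory.
Local Open Scope classical_set_scope.
Local Open Scope ring_scope.

Module Aux.
Import numFieldNormedType.Exports.
Lemma normal_pdf_at0 (R : realType) (s : R) : s != 0 ->
  normal_pdf 0 s 0 = normal_peak s.
Proof.
move=> s0; rewrite normal_pdfE //= /normal_fun subr0 expr0n /= oppr0 mul0r expR0 mulr1.
done.
Qed.

Lemma normal_prob_inj (R : realType) (s1 s2 : R) : 0 < s1 -> 0 < s2 ->
  (forall A, measurable A -> normal_prob 0 s1 A = normal_prob 0 s2 A) -> s1 = s2.
Proof.
move=> s1p s2p H.
have INT (s : R) : lebesgue_measure.-integrable `[(-1)%R, 1%R] (EFin \o normal_pdf 0 s).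
  apply: integrableS (integrable_normal_pdf 0 s) => //; exact: measurable_itv.
have key (s : R) (sp : 0 < s) := @continuous_FTC1_closed R (normal_pdf 0 s) (-1) 0 1 ltr01
    (INT s) (ltrN10 _) (@continuous_normal_pdf R 0 s (lt0r_neq0 sp) 0).
have [_ e1] := key _ s1p; have [_ e2] := key _ s2p.
have e : normal_pdf 0 s1 0 = normal_pdf 0 s2 0.
  rewrite -e1 -e2. f_equal. apply/funext => y.
  rewrite /Rintegral; congr fine; apply: H; exact: measurable_itv.
rewrite !normal_pdf_at0 ?lt0r_neq0 // in e.
move/invr_inj: e => /eqP; rewrite eqr_sqrt; last 2 first.
- by rewrite mulrn_wge0 // mulr_ge0 ?pi_ge0 // sqr_ge0.
- by rewrite mulrn_wge0 // mulr_ge0 ?pi_ge0 // sqr_ge0.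
have pi2 : pi *+ 2 != 0 :> R by rewrite mulrn_eq0 /= gt_eqF // pi_gt0.
rewrite -!mulrnAr (inj_eq (mulIf pi2)) eqrXn2 // ?ltW //.
by move/eqP.
Qed.

Lemma pd_unit (R : realFieldType) (n : nat) (P : 'M[R]_n) :
  (forall a : 'rV[R]_n, a != 0 -> 0 < (a *m P *m a^T) 0 0) -> P \in unitmx.
Proof.
move=> pd; rewrite -row_free_unit -kermx_eq0; apply/negP => /negPn/eqP K0.
have [i Hi] : exists i, row i (kermx P) != 0.
  case/boolP: [exists i, row i (kermx P) != 0] => [/existsP//|].
  rewrite negb_exists => /forallP H; exfalso.
  apply/K0/row_matrixP => i; rewrite row0; exact/eqP/negPn/H.
have := pd _ Hi.
by rewrite -row_mul mulmx_ker row0 !mul0mx mxE ltxx.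
Qed.

Lemma polar0 (R : numFieldType) (n : nat) (D : 'M[R]_n) :
  D^T = D -> (forall b : 'rV[R]_n, (b *m D *m b^T) 0 0 = 0) -> D = 0.
Proof.
move=> sD H.
pose e (i : 'I_n) : 'rV[R]_n := delta_mx 0 i.
have E i j : (e i *m D *m (e j)^T) 0 0 = D i j.
  by rewrite /e -rowE trmx_delta -colE !mxE.
apply/matrixP => i j; rewrite mxE.
have := H (e i + e j).
have addE (A B : 'M[R]_1) : (A + B) 0 0 = A 0 0 + B 0 0 by rewrite mxE.
rewrite linearD /= !(mulmxDl, mulmxDr) !addE !E.
have := H (e i); rewrite E => ->.
have := H (e j); rewrite E => ->.
have -> : D j i = D i j by rewrite -[in LHS]sD mxE.
rewrite add0r addr0 -mulr2n => /eqP; rewrite mulrn_eq0 /= => /eqP //.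
Qed.

End Aux.
Import Aux.

Theorem theorem1 (R : realType) (dm : measure_display) (Omega : measurableType dm)
  (P : probability Omega R) (N d : nat)
  (T1 T2 P1 P2 : 'M[R]_(N.+1 * d))
  (x y v w : Omega -> 'cV[R]_(N.+1 * d)) :
  T1 \in unitmx -> T2 \in unitmx ->
  (forall o, T1 *m x o = v o) ->
  (forall o, T2 *m y o = w o) ->
  centered_nonsingular_gaussian P v P1 ->
  centered_nonsingular_gaussian P w P2 ->
  prob_equiv P x y ->
  (alg_equiv x y <->
   forall o, T2^T *m invmx P2 *m w o = T1^T *m invmx P1 *m v o).
Proof.
move=> uT1 uT2 ex ey [_ sP1 pd1 g1] [_ sP2 pd2 g2] pe.
set n := (N.+1 * d)%N in T1 T2 P1 P2 x y v w uT1 uT2 ex ey sP1 sP2 pd1 pd2 g1 g2 pe *.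
have xE o : x o = invmx T1 *m v o by rewrite -ex mulKmx.
have yE o : y o = invmx T2 *m w o by rewrite -ey mulKmx.
pose Q1 := invmx T1 *m P1 *m (invmx T1)^T.
pose Q2 := invmx T2 *m P2 *m (invmx T2)^T.
have qE (T Pm : 'M[R]_n) (b : 'rV[R]_n) :
    (b *m (invmx T *m Pm *m (invmx T)^T) *m b^T) 0 0
    = ((b *m invmx T) *m Pm *m (b *m invmx T)^T) 0 0.
  by rewrite trmx_mul !mulmxA.
have cnz (T : 'M[R]_n) (b : 'rV[R]_n) : T \in unitmx -> b != 0 -> b *m invmx T != 0.
  move=> uT; apply: contra => /eqP h; apply/eqP.
  by rewrite -(mulmxKV uT b) h mul0mx.
have tupE (b : 'rV[R]_n) (z : Omega -> 'cV[R]_n) (A : set R) :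
    (fun o => (b *m z o) 0 0) @^-1` A =
    rv_tuple z @^-1` ((fun t : n.-tuple R => \sum_i b 0 i * tnth t i) @^-1` A).
  apply/funext => o /=; congr A; rewrite mxE; apply: eq_bigr => i _.
  by rewrite tnth_mktuple.
have fmeas (b : 'rV[R]_n) (A : set R) : measurable A ->
    measurable ((fun t : n.-tuple R => \sum_i b 0 i * tnth t i) @^-1` A).
  move=> mA.
  have mf : measurable_fun setT (fun t : n.-tuple R => \sum_i b 0 i * tnth t i).
    apply: measurable_sum => i; apply: measurable_realfun.measurable_funM => //.
    exact: measurable_tnth.
  have := mf measurableT A mA; rewrite setTI; exact.
have Qq (b : 'rV[R]_n) : (b *m Q1 *m b^T) 0 0 = (b *m Q2 *m b^T) 0 0.
  have [->|bnz] := eqVneq b 0; first by rewrite !mul0mx.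
  rewrite /Q1 /Q2 !qE.
  have c1 := cnz _ _ uT1 bnz; have c2 := cnz _ _ uT2 bnz.
  have p1 := pd1 _ c1; have p2 := pd2 _ c2.
  have h : Num.sqrt ((b *m invmx T1 *m P1 *m (b *m invmx T1)^T) 0 0)
         = Num.sqrt ((b *m invmx T2 *m P2 *m (b *m invmx T2)^T) 0 0).
    apply: normal_prob_inj; [by rewrite sqrtr_gt0 | by rewrite sqrtr_gt0 | ].
    move=> A mA.
    rewrite -(g1 _ c1 A mA) -(g2 _ c2 A mA).
    have -> : (fun o => (b *m invmx T1 *m v o) 0 0) = (fun o => (b *m x o) 0 0).
      by apply/funext => o; rewrite xE mulmxA.
    have -> : (fun o => (b *m invmx T2 *m w o) 0 0) = (fun o => (b *m y o) 0 0).
      by apply/funext => o; rewrite yE mulmxA.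
    rewrite !tupE; apply: pe; exact: fmeas.
  by move/eqP: h; rewrite eqr_sqrt ?ltW // => /eqP.
have QQ : Q1 = Q2.
  apply/eqP; rewrite -subr_eq0; apply/eqP; apply: polar0.
    by rewrite linearB /= /Q1 /Q2 !trmx_mul !trmxK sP1 sP2 !mulmxA.
  have oppE (A : 'M[R]_1) : (- A) 0 0 = - A 0 0 by rewrite mxE.
  move=> b; rewrite mulmxBr mulmxBl mxE oppE Qq subrr.
  done.
have uP1 := @pd_unit _ _ P1 pd1; have uP2 := @pd_unit _ _ P2 pd2.
pose M1 := T1^T *m invmx P1 *m T1.
pose M2 := T2^T *m invmx P2 *m T2.
have QM (T Pm : 'M[R]_n) : T \in unitmx -> Pm \in unitmx ->
    (invmx T *m Pm *m (invmx T)^T) *m (T^T *m invmx Pm *m T) = 1%:M.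
  move=> uT uP.
  have e1 : (invmx T)^T *m T^T = 1%:M by rewrite -trmx_mul mulmxV // trmx1.
  rewrite !mulmxA -[invmx T *m Pm *m (invmx T)^T *m T^T]mulmxA e1 mulmx1.
  by rewrite -[invmx T *m Pm *m invmx Pm]mulmxA mulmxV // mulmx1 mulVmx.
have QM1 : Q1 *m M1 = 1%:M by exact: QM.
have QM2 : Q1 *m M2 = 1%:M by rewrite QQ; exact: QM.
have MQ1 := mulmx1C QM1.
have MM : M1 = M2 by rewrite -[M1]mulmx1 -QM2 mulmxA MQ1 mul1mx.
have vE o : T1^T *m invmx P1 *m v o = M1 *m x o by rewrite -ex mulmxA.
have wE o : T2^T *m invmx P2 *m w o = M2 *m y o by rewrite -ey mulmxA.
split.
- by move=> H o; rewrite vE wE H MM.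
- move=> H o; rewrite -[x o]mul1mx -QM1 -mulmxA -vE -H wE -MM mulmxA QM1 mul1mx.
  done.
Qed.
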